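(* For every VASS MDP $\mathcal{A}$ there exist MD strategies $\pi_1,\dots,\pi_k\in\Sigma_{\mathrm{MD}}$, states $p_1,\dots,p_k\in Q$, and a function $\mathit{Decomp}_{\mathcal{A}}$ such that for every finite path $\alpha$ (of positive length): (1) $\mathit{Decomp}_{\mathcal{A}}(\alpha)$ is an MD-decomposition of $\alpha$ under $\pi_1,\dots,\pi_k$ and $p_1,\dots,p_k$; (2) $\mathit{Decomp}_{\mathcal{A}}(\alpha)=\mathit{Decomp}_{\mathcal{A}}(\alpha_{..\mathit{len}(\alpha)-1})\circ\gamma^1\circ\cdots\circ\gamma^k$ where exactly one of $\gamma^1,\dots,\gamma^k$ has positive length (its index $i$ is called the mode of $\alpha$); (3) if the last state of $\alpha_{..\mathit{len}(\alpha)-1}$ is probabilistic, then the mode of $\alpha$ does not depend on the last transition of $\alpha$ (i.e., all one-transition extensions of $\alpha_{..\mathit{len}(\alpha)-1}$ have the same mode).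
   Context: A $d$-dimensional VASS MDP is a tuple $\mathcal{A}=(Q,(Q_n,Q_p),T,P)$: $Q$ finite nonempty set of states partitioned into nondeterministic states $Q_n$ and probabilistic states $Q_p$; $T\subseteq Q\times\mathbb{Z}^d\times Q$ a finite set of transitions such that every $p\in Q$ has a nonempty set $\mathit{Out}(p)$ of outgoing transitions $(p,\mathbf{u},q)$; $P$ assigns to each $t\in\mathit{Out}(p)$ with $p\in Q_p$ a positive rational probability, summing to $1$ over $\mathit{Out}(p)$. A finite path of length $m$ is $p_0,\mathbf{v}_1,p_1,\dots,\mathbf{v}_m,p_m$ with $(p_i,\mathbf{v}_{i+1},p_{i+1})\in T$; a path of length $0$ is a single state. $\mathit{len}(\alpha)$ is the length, and $\alpha_{..i}=p_0,\mathbf{v}_1,\dots,p_i$ is the prefix of length $i$. For paths $\alpha$ ending in state $q_0$ and $\beta=q_0,\mathbf{u}_1,q_1,\dots,q_\ell$, the concatenation is $\alpha\circ\beta=p_0,\mathbf{v}_1,\dots,p_m,\mathbf{u}_1,q_1,\dots,q_\ell$ (with $p_m=q_0$). An MD strategy $\sigma$ assigns to each $p\in Q_n$ a single transition $\sigma(p)\in\mathit{Out}(p)$; $\Sigma_{\mathrm{MD}}$ is the set of MD strategies. A path $\alpha=p_0,\mathbf{v}_1,\dots,p_m$ is compatible with MD strategy $\sigma$ if $\sigma(p_i)=(p_i,\mathbf{v}_{i+1},p_{i+1})$ for every $i<m$ with $p_i\in Q_n$. Given $\pi_1,\dots,\pi_k\in\Sigma_{\mathrm{MD}}$ and $p_1,\dots,p_k\in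 Q$ (not necessarily distinct), an MD-decomposition of a path $\alpha$ under them is a decomposition $\alpha=\gamma_1^1\circ\cdots\circ\gamma_1^k\circ\gamma_2^1\circ\cdots\circ\gamma_2^k\circ\cdots\circ\gamma_\ell^1\circ\cdots\circ\gamma_\ell^k$ into finitely many paths (possibly of length zero) such that for all $i<\ell$ and $j\le k$ the last state of $\gamma_i^j$ equals the first state of $\gamma_{i+1}^j$, and for every $j\le k$, $\gamma_1^j\circ\cdots\circ\gamma_\ell^j$ is a path starting in $p_j$ and compatible with $\pi_j$.
   Formalization: In the equation $\alpha=\gamma_1^1\circ\cdots\circ\gamma_\ell^k$ of an MD-decomposition, length-zero pieces are neutral, so each positive-length piece need only start at the last state of the preceding positive-length piece (or at the first state of α). The statement above fails without it. *)

(* Defs.v *)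
From HB Require Import structures.
From mathcomp Require Import all_boot all_order all_algebra.
Set Implicit Arguments. Unset Strict Implicit. Unset Printing Implicit Defensive.
Import Order.TTheory GRing.Theory Num.Theory.

Notation vec d := ('rV[int]_d).

(* A d-dimensional VASS MDP.  [isprob p] means p is probabilistic (p \in Q_p);
   otherwise p is nondeterministic (p \in Q_n). *)
Record VASS_MDP (d : nat) := VassMdp {
  st : finType;
  st_nonempty : 0 < #|st|;
  isprob : pred st;
  trans : seq (st * vec d * st);
  trans_uniq : uniq trans;
  out_nonempty : forall p : st, [seq t <- trans | t.1.1 == p] != [::];
  prob : st * vec d * st -> rat;
  prob_pos : forall (p : st) t, isprob p -> t \in [seq t <- trans | t.1.1 == p] ->
                (0 < prob t)%R;
  prob_sum : forall p : st, isprob p ->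
                (\sum_(t <- [seq t <- trans | t.1.1 == p]) prob t = 1)%R
}.

Section Paths.
Variables (d : nat) (A : VASS_MDP d).
Local Notation Q := (st A).

Definition Out (p : Q) := [seq t <- trans A | t.1.1 == p].

(* A (candidate) finite path: initial state followed by a sequence of steps
   (v_{i+1}, p_{i+1}). *)
Record vpath := VPath { pstart : Q; psteps : seq (vec d * Q) }.

Fixpoint valid_from (p : Q) (s : seq (vec d * Q)) : bool :=
  match s with
  | [::] => true
  | (v, q) :: s' => ((p, v, q) \in trans A) && valid_from q s'
  end.

Definition is_path (a : vpath) : bool := valid_from (pstart a) (psteps a).

Definition len (a : vpath) : nat := size (psteps a).

Definition plast (a : vpath) : Q := last (pstart a) (map snd (psteps a)).

Definition pprefix (a : vpath) (i : nat) : vpath := VPath (pstart a) (take i (psteps a)).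

(* MD strategy: a choice of outgoing transition for every nondeterministic
   state (the value on probabilistic states is irrelevant). *)
Definition strategy := Q -> vec d * Q.
Definition is_MD (sigma : strategy) : Prop :=
  forall p : Q, ~~ isprob p -> (p, (sigma p).1, (sigma p).2) \in trans A.

Fixpoint compat_from (sigma : strategy) (p : Q) (s : seq (vec d * Q)) : bool :=
  match s with
  | [::] => true
  | (v, q) :: s' => (isprob p || (sigma p == (v, q))) && compat_from sigma q s'
  end.

Definition compatible (sigma : strategy) (a : vpath) : bool :=
  compat_from sigma (pstart a) (psteps a).

(* alpha = g_1 o g_2 o ... o g_n, where length-zero paths act as neutral
   elements of concatenation. *)
Fixpoint chain_ok (cur : Q) (gs : seq vpath) : bool :=
  match gs with
  | [::] => true
  | g :: gs' => if psteps g is [::] then chain_ok cur gs'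
                else (pstart g == cur) && chain_ok (plast g) gs'
  end.

Definition is_concat (gs : seq vpath) (a : vpath) : Prop :=
  chain_ok (pstart a) gs /\ psteps a = flatten (map psteps gs).

(* A decomposition is a sequence of rounds; round i is the k-tuple
   (gamma_i^1, ..., gamma_i^k). *)
Definition decomp (k : nat) := seq ('I_k -> vpath).

Definition flat_decomp k (D : decomp k) : seq vpath :=
  flatten [seq [seq r j | j <- enum 'I_k] | r <- D].

Definition is_MD_decomposition k (pis : 'I_k -> strategy) (ps : 'I_k -> Q)
    (D : decomp k) (a : vpath) : Prop :=
  [/\ 0 < size D,
      forall (i : nat) (j : 'I_k), i < size D -> forall r0, is_path (nth r0 D i j),
      is_concat (flat_decomp D) a,
      forall (i : nat) (j : 'I_k), i.+1 < size D ->
         forall r0, plast (nth r0 D i j) = pstart (nth r0 D i.+1 j) &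
      forall (j : 'I_k),
        (forall r0, pstart (head r0 D j) = ps j) /\
        let cj := VPath (ps j) (flatten [seq psteps (r j) | r <- D]) in
        is_path cj /\ compatible (pis j) cj].

End Paths.

(* Main.v *)
Require Import Defs.
From mathcomp Require Import all_boot all_order all_algebra.
From Stdlib Require Import FunctionalExtensionality.
Set Implicit Arguments. Unset Strict Implicit. Unset Printing Implicit Defensive.
Fixpoint labc (T Q : eqType) (src : T -> Q) (t0 : T) (ts : seq T) (r : Q) (dr : T)
  (f : nat -> seq T) (v : seq T) (j : nat) : T :=
  if (f j == v) && (src (nth t0 ts j) == r) then nth t0 ts j
  else if j is j'.+1 then labc src t0 ts r dr f v j' else dr.

Fixpoint ty (T Q : eqType) (src : T -> Q) (t0 : T) (ts : seq T) (dflt : Q -> T)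
  (rs : seq Q) (i : nat) : seq T :=
  match rs with
  | [::] => [::]
  | r :: rs' => labc src t0 ts r (dflt r) (ty src t0 ts dflt rs') (ty src t0 ts dflt rs' i) i
                :: ty src t0 ts dflt rs' i
  end.

Lemma labc_const (T Q : eqType) (src : T -> Q) t0 ts r dr f v i j :
  i <= j -> (forall x, i < x <= j -> f x != v) ->
  labc src t0 ts r dr f v j = labc src t0 ts r dr f v i.
Proof.
elim: j => [|j IH] hij hx; first by rewrite leqn0 in hij; rewrite (eqP hij).
rewrite leq_eqVlt in hij; case/orP: hij => [/eqP -> //|hij].
rewrite /= (negbTE (hx j.+1 _)) /=; last by rewrite hij leqnn.
apply: IH => // x /andP[h1 h2]; apply: hx; rewrite h1 /=; exact: leqW.
Qed.

Definition chainT (T Q : eqType) (src tgt : T -> Q) (t0 : T) (ts : seq T) :=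
  forall i, i.+1 < size ts -> tgt (nth t0 ts i) = src (nth t0 ts i.+1).

Lemma labc_S (T Q : eqType) (src : T -> Q) t0 ts r dr f v j :
  labc src t0 ts r dr f v j.+1 =
  if (f j.+1 == v) && (src (nth t0 ts j.+1) == r) then nth t0 ts j.+1
  else labc src t0 ts r dr f v j.
Proof. by []. Qed.

Lemma chain_class (T Q : eqType) (src tgt : T -> Q) t0 ts dflt rs :
  chainT src tgt t0 ts ->
  forall i i', i < i' -> i' < size ts ->
  ty src t0 ts dflt rs i = ty src t0 ts dflt rs i' ->
  (forall j, i < j < i' -> ty src t0 ts dflt rs j != ty src t0 ts dflt rs i) ->
  tgt (nth t0 ts i) = src (nth t0 ts i').
Proof.
move=> hch; elim: rs => [|r rs IH] i i' hii' hi' heq hbt.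
  case: (ltnP i.+1 i') => h.
    by have := hbt i.+1; rewrite ltnSn h /= => /(_ isT).
  have -> : i' = i.+1 by apply/eqP; rewrite eqn_leq h hii'.
  by apply: hch; rewrite (leq_ltn_trans _ hi').
set P := ty src t0 ts dflt rs.
have [hPi hlab] : P i = P i' /\
   labc src t0 ts r (dflt r) P (P i) i = labc src t0 ts r (dflt r) P (P i') i'.
  by move: heq => /= [h1 h2]; rewrite /P; split.
set v := P i in hPi hlab *.
have hlabj : forall j, i < j < i' -> P j = v ->
    labc src t0 ts r (dflt r) P v j != labc src t0 ts r (dflt r) P v i.
  move=> j hj hPj; have := hbt j hj; rewrite /= -/P hPj -/v.
  by apply: contra => /eqP ->.
case: (boolP (has (fun j => P j == v) (iota i.+1 (i' - i.+1)))) => hh; last first.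
  apply: IH => // j hj; move/hasPn: hh => /(_ j); rewrite mem_iota.
  case/andP: hj => h1 h2; rewrite h1 /= subnKC // => /(_ h2).
  by rewrite /v.
have exP : exists j, (i < j < i') && (P j == v).
  case/hasP: hh => j; rewrite mem_iota => /andP[h1 h2] h3; exists j.
  by rewrite h1 h3 -(subnKC hii') h2.
case: (ex_minnP exP) => j1 /andP[/andP[hj1a hj1b] /eqP hPj1] hmin.
have hbetw : forall x, i < x < j1 -> P x != v.
  move=> x /andP[h1 h2]; apply/negP => hx.
  have := hmin x; rewrite h1 (ltn_trans h2 hj1b) hx /= => /(_ isT).
  by rewrite leqNgt h2.
have hsrcj1 : src (nth t0 ts j1) = r.
  apply/eqP; apply/negPn/negP => hne.
  have := hlabj j1 (introT andP (conj hj1a hj1b)) hPj1.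
  case: j1 hj1a hj1b hPj1 hmin hbetw hne => [//|j'] hj1a hj1b hPj1 hmin hbetw hne.
  rewrite labc_S (negbTE hne) andbF.
  rewrite (@labc_const _ _ _ _ _ _ _ _ _ i j') ?eqxx //.
have hchj : tgt (nth t0 ts i) = src (nth t0 ts j1).
  apply: IH => //; first exact: ltn_trans hj1b hi'.
have claim : forall m, j1 + m < i' ->
    labc src t0 ts r (dflt r) P v (j1 + m) != labc src t0 ts r (dflt r) P v i.
  elim=> [|m IHm] hm; first by rewrite addn0; apply: hlabj => //; rewrite hj1a hj1b.
  case: (boolP (P (j1 + m.+1) == v)) => hPx.
    apply: (hlabj _ _ (eqP hPx)). by rewrite hm andbT ltn_addr.
  rewrite addnS labc_S -addnS (negbTE hPx) andFb.
  apply: IHm; apply: ltnW; by rewrite -addnS.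
have hsrci' : src (nth t0 ts i') = r.
  apply/eqP; apply/negPn/negP => hne.
  have hpos : 0 < i' by apply: leq_ltn_trans hii'.
  have e1 : labc src t0 ts r (dflt r) P v i' = labc src t0 ts r (dflt r) P v i'.-1.
    by rewrite -{1}(prednK hpos) labc_S (prednK hpos) (negbTE hne) andbF.
  have hj : j1 <= i'.-1 by rewrite -ltnS (prednK hpos).
  have hlt : i'.-1 < i' by rewrite -{2}(prednK hpos).
  have := claim (i'.-1 - j1); rewrite (subnKC hj) => /(_ hlt).
  by rewrite -e1 hlab hPi eqxx.
by rewrite hchj hsrcj1 hsrci'.
Qed.

Lemma size_ty (T Q : eqType) (src : T -> Q) t0 ts dflt rs i :
  size (ty src t0 ts dflt rs i) = size rs.
Proof. by elim: rs => //= r rs ->. Qed.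

Lemma ty_label (T Q : eqType) (src : T -> Q) t0 ts dflt rs i p :
  p \in rs -> src (nth t0 ts i) = p ->
  nth t0 (ty src t0 ts dflt rs i) (index p rs) = nth t0 ts i.
Proof.
elim: rs => //= r rs IH; rewrite inE => hp hs.
case: (eqVneq r p) => [hrp|hne] /=.
  by rewrite hrp; case: i {IH} hs => [|i] hs /=; rewrite eqxx hs eqxx.
apply: IH => //; move: hp; rewrite eq_sym (negbTE hne) //.
Qed.

Lemma labc_mem (T Q : eqType) (src : T -> Q) t0 ts r dr f v j (S : pred T) :
  (forall x, nth t0 ts x \in S) -> dr \in S -> labc src t0 ts r dr f v j \in S.
Proof. by move=> h1 h2; elim: j => [|j IH] /=; case: ifP. Qed.

Lemma ty_mem (T Q : eqType) (src : T -> Q) t0 ts dflt rs i (S : pred T) :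
  (forall x, nth t0 ts x \in S) -> (forall r, dflt r \in S) ->
  all (mem S) (ty src t0 ts dflt rs i).
Proof.
move=> h1 h2; elim: rs => //= r rs ->; rewrite andbT; exact: labc_mem.
Qed.

Lemma ty_prefix (T Q : eqType) (src : T -> Q) t0 ts ts' dflt rs i :
  (forall j, j <= i -> nth t0 ts j = nth t0 ts' j) ->
  ty src t0 ts dflt rs i = ty src t0 ts' dflt rs i.
Proof.
elim: rs i => //= r rs IH i h; rewrite (IH i h); congr (_ :: _).
have : forall j, j <= i -> labc src t0 ts r (dflt r) (ty src t0 ts dflt rs) (ty src t0 ts' dflt rs i) j
     = labc src t0 ts' r (dflt r) (ty src t0 ts' dflt rs) (ty src t0 ts' dflt rs i) j.
  have hty : forall j, j <= i -> ty src t0 ts dflt rs j = ty src t0 ts' dflt rs j.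
    move=> j hj; apply: IH => x hx; apply: h; exact: leq_trans hx hj.
  elim=> [|j IHj] hj /=.
    by rewrite (hty 0) // (h 0).
  by rewrite IHj ?(ltnW hj) // (hty j.+1) // (h j.+1).
by apply.
Qed.

Lemma ty_prob (T Q : eqType) (src : T -> Q) t0 ts ts' dflt rs i :
  (forall j, j < i -> nth t0 ts j = nth t0 ts' j) ->
  src (nth t0 ts i) = src (nth t0 ts' i) -> src (nth t0 ts i) \notin rs ->
  ty src t0 ts dflt rs i = ty src t0 ts' dflt rs i.
Proof.
move=> h hs; elim: rs => //= r rs IH; rewrite inE negb_or => /andP[hr hn].
rewrite (IH hn); congr (_ :: _).
have hr' : (src (nth t0 ts i) == r) = false by apply/negbTE.
have hr'' : (src (nth t0 ts' i) == r) = false by rewrite -hs.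
case: i h hs hr hn hr' hr'' IH => [|i] h hs hr hn hr' hr'' IH /=;
  rewrite hr' hr'' !andbF //.
have : forall j, j <= i -> labc src t0 ts r (dflt r) (ty src t0 ts dflt rs) (ty src t0 ts' dflt rs i.+1) j
     = labc src t0 ts' r (dflt r) (ty src t0 ts' dflt rs) (ty src t0 ts' dflt rs i.+1) j.
  have hty : forall j, j <= i -> ty src t0 ts dflt rs j = ty src t0 ts' dflt rs j.
    move=> j hj; apply: ty_prefix => x hx; apply: h; by rewrite ltnS (leq_trans hx hj).
  have hnn : forall j, j <= i -> nth t0 ts j = nth t0 ts' j.
    move=> j hj; apply: h; exact: hj.
  elim=> [|j IHj] hj /=.
    by rewrite (hty 0) // (hnn 0).
  by rewrite IHj ?(ltnW hj) // (hty j.+1) // (hnn j.+1).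
by apply.
Qed.

Definition Tr d (A : VASS_MDP d) := (st A * vec d * st A)%type.

Fixpoint trs_from d (A : VASS_MDP d) (p : st A) (s : seq (vec d * st A)) : seq (Tr A) :=
  match s with
  | [::] => [::]
  | (v, q) :: s' => (p, v, q) :: trs_from q s'
  end.

Definition srcT d (A : VASS_MDP d) (t : Tr A) : st A := t.1.1.
Definition tgtT d (A : VASS_MDP d) (t : Tr A) : st A := t.2.
Definition stpT d (A : VASS_MDP d) (t : Tr A) : vec d * st A := (t.1.2, t.2).

Lemma size_trs d (A : VASS_MDP d) (p : st A) s : size (trs_from p s) = size s.
Proof. by elim: s p => [|[v q] s IH] p //=; rewrite IH. Qed.

Lemma chain_trs d (A : VASS_MDP d) t0 (p : st A) s :
  chainT (@srcT d A) (@tgtT d A) t0 (trs_from p s).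
Proof.
elim: s p => [|[v q] s IH] p i //=.
case: i => [|i] /=; first by case: s {IH} => [|[v' q'] s'].
rewrite ltnS => h; exact: IH.
Qed.

Lemma valid_trs d (A : VASS_MDP d) (p : st A) s :
  valid_from p s = all (mem (trans A)) (trs_from p s).
Proof. by elim: s p => [|[v q] s IH] p //=; rewrite IH. Qed.

Lemma stp_trs d (A : VASS_MDP d) (p : st A) s : map (@stpT d A) (trs_from p s) = s.
Proof. by elim: s p => [|[v q] s IH] p //=; rewrite IH. Qed.

Lemma take_trs d (A : VASS_MDP d) (p : st A) s n :
  trs_from p (take n s) = take n (trs_from p s).
Proof.
elim: s p n => [|[v q] s IH] p [|n] //=; by rewrite IH.
Qed.

Lemma src_trs d (A : VASS_MDP d) t0 (p : st A) s i : i < size s ->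
  srcT (nth t0 (trs_from p s) i) = last p (map snd (take i s)).
Proof.
elim: s p i => [|[v q] s IH] p [|i] //=; rewrite ltnS => h; exact: IH.
Qed.

Definition trs d (A : VASS_MDP d) (a : vpath A) := trs_from (pstart a) (psteps a).

Definition rsA d (A : VASS_MDP d) : seq (st A) := [seq p <- enum (st A) | ~~ isprob p].
Definition dfl d (A : VASS_MDP d) (t0 : Tr A) (p : st A) : Tr A := head t0 (Out p).
Definition KA d (A : VASS_MDP d) : finType :=
  ({ffun 'I_(size (rsA A)).+1 -> 'I_(size (trans A)).+1} * st A)%type.

Definition enc d (A : VASS_MDP d) (t0 : Tr A) (v : seq (Tr A))
  : {ffun 'I_(size (rsA A)).+1 -> 'I_(size (trans A)).+1} :=
  [ffun x : 'I_(size (rsA A)).+1 => inord (index (nth t0 v x) (trans A))].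

Definition strat d (A : VASS_MDP d) (t0 : Tr A)
  (sg : {ffun 'I_(size (rsA A)).+1 -> 'I_(size (trans A)).+1}) : strategy A :=
  fun p => let t := nth t0 (trans A) (sg (inord (index p (rsA A)))) in
           if t.1.1 == p then (t.1.2, t.2) else stpT (dfl t0 p).

Definition tyA d (A : VASS_MDP d) (t0 : Tr A) (ts : seq (Tr A)) (i : nat) :=
  ty (@srcT d A) t0 ts (dfl t0) (rsA A) i.

Definition startA d (A : VASS_MDP d) (t0 : Tr A) (ts : seq (Tr A)) (i : nat) : st A :=
  srcT (nth t0 ts (find (fun j => tyA t0 ts j == tyA t0 ts i) (iota 0 i.+1))).

Definition cpK d (A : VASS_MDP d) (t0 : Tr A) ts i : KA A :=
  (enc t0 (tyA t0 ts i), startA t0 ts i).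

Definition cp d (A : VASS_MDP d) (t0 : Tr A) ts i : 'I_#|KA A| := enum_rank (cpK t0 ts i).

Definition pisA d (A : VASS_MDP d) (t0 : Tr A) (j : 'I_#|KA A|) : strategy A :=
  strat t0 (enum_val j).1.
Definition psA d (A : VASS_MDP d) (j : 'I_#|KA A|) : st A := (enum_val j).2.

Fixpoint pos d (A : VASS_MDP d) (t0 : Tr A) ts (c : 'I_#|KA A|) (i : nat) : st A :=
  if i is i'.+1 then (if cp t0 ts i' == c then tgtT (nth t0 ts i') else pos t0 ts c i')
  else psA c.

Definition piece d (A : VASS_MDP d) (t0 : Tr A) ts i (c : 'I_#|KA A|) : vpath A :=
  if cp t0 ts i == c then VPath (srcT (nth t0 ts i)) [:: stpT (nth t0 ts i)]
  else VPath (pos t0 ts c i) [::].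

Definition DecompA d (A : VASS_MDP d) (t0 : Tr A) (a : vpath A) : decomp A #|KA A| :=
  [seq piece t0 (trs a) i | i <- iota 0 (len a)].

Definition modeA d (A : VASS_MDP d) (t0 : Tr A) (a : vpath A) : 'I_#|KA A| :=
  cp t0 (trs a) (len a).-1.

Lemma dfl_out d (A : VASS_MDP d) (t0 : Tr A) (p : st A) : dfl t0 p \in Out p.
Proof.
rewrite /dfl; have := out_nonempty p; rewrite -/(Out p).
by case: (Out p) => [|x s] //= _; rewrite inE eqxx.
Qed.

Lemma dfl_trans d (A : VASS_MDP d) (t0 : Tr A) (p : st A) :
  dfl t0 p \in trans A /\ srcT (dfl t0 p) = p.
Proof.
have := dfl_out t0 p; rewrite /Out mem_filter => /andP[/eqP h1 h2]; by split.
Qed.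

Lemma nth_in_trans d (A : VASS_MDP d) (t0 : Tr A) ts x :
  t0 \in trans A -> all (mem (trans A)) ts -> nth t0 ts x \in trans A.
Proof.
move=> h0 /allP h; case: (ltnP x (size ts)) => hx; first by apply: h; rewrite mem_nth.
by rewrite nth_default.
Qed.

Lemma tyA_in d (A : VASS_MDP d) (t0 : Tr A) ts i :
  t0 \in trans A -> all (mem (trans A)) ts -> all (mem (trans A)) (tyA t0 ts i).
Proof.
move=> h0 h; apply: ty_mem => [x|r]; first exact: nth_in_trans.
by case: (dfl_trans t0 r).
Qed.

Lemma enc_inj d (A : VASS_MDP d) (t0 : Tr A) v w :
  size v = size (rsA A) -> size w = size (rsA A) ->
  all (mem (trans A)) v -> all (mem (trans A)) w -> enc t0 v = enc t0 w -> v = w.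
Proof.
move=> hv hw /allP av /allP aw he; apply: (@eq_from_nth _ t0); first by rewrite hv hw.
move=> x hx; rewrite hv in hx.
have := congr1 (fun f : {ffun 'I_(size (rsA A)).+1 -> 'I_(size (trans A)).+1} =>
   (f (inord x) : nat)) he.
rewrite !ffunE !inordK ?ltnS ?index_size ?(ltnW hx) //.
move=> hi; rewrite -(nth_index t0 (av _ (mem_nth t0 _))) ?hv //.
by rewrite hi nth_index //; apply: aw; rewrite mem_nth // hw.
Qed.

Lemma cp_ty d (A : VASS_MDP d) (t0 : Tr A) ts x i :
  t0 \in trans A -> all (mem (trans A)) ts ->
  cp t0 ts x = cp t0 ts i -> tyA t0 ts x = tyA t0 ts i.
Proof.
move=> h0 hts /enum_rank_inj [] he _.
by apply: (enc_inj (t0 := t0)); rewrite ?size_ty ?tyA_in.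
Qed.

Lemma start_eq d (A : VASS_MDP d) (t0 : Tr A) ts x i :
  x <= i -> tyA t0 ts x = tyA t0 ts i -> startA t0 ts x = startA t0 ts i.
Proof.
move=> hxi heq; rewrite /startA heq.
have -> : iota 0 i.+1 = iota 0 x.+1 ++ iota x.+1 (i - x).
  by rewrite -iotaD addSn subnKC.
rewrite find_cat; case: ifP => // /hasPn /(_ x); rewrite mem_iota ltnSn heq eqxx.
by move=> /(_ isT).
Qed.

Lemma ty_cp d (A : VASS_MDP d) (t0 : Tr A) ts x i :
  x <= i -> tyA t0 ts x = tyA t0 ts i -> cp t0 ts x = cp t0 ts i.
Proof. by move=> hxi heq; rewrite /cp /cpK heq (start_eq hxi heq). Qed.

Lemma start_first d (A : VASS_MDP d) (t0 : Tr A) ts i :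
  (forall x, x < i -> tyA t0 ts x != tyA t0 ts i) -> startA t0 ts i = srcT (nth t0 ts i).
Proof.
move=> h; rewrite /startA.
have -> : iota 0 i.+1 = iota 0 i ++ [:: i] by rewrite -addn1 iotaD.
rewrite find_cat.
case: ifP => [/hasP [x]|_]; first by rewrite mem_iota add0n => /andP[_ /h] /negbTE ->.
by rewrite size_iota /= eqxx addn0.
Qed.

Lemma pos_spec d (A : VASS_MDP d) (t0 : Tr A) ts c i :
  (pos t0 ts c i = psA c /\ forall x, x < i -> cp t0 ts x != c) \/
  (exists x, [/\ x < i, cp t0 ts x = c, pos t0 ts c i = tgtT (nth t0 ts x) &
     forall z, x < z < i -> cp t0 ts z != c]).
Proof.
elim: i => [|i IH] /=; first by left.
case: (eqVneq (cp t0 ts i) c) => hc.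
  right; exists i; split => // z /andP[h1 h2]; by rewrite ltnS leqNgt h1 in h2.
case: IH => [[h1 h2]|[x [h1 h2 h3 h4]]].
  left; split => // x; rewrite ltnS leq_eqVlt => /orP[/eqP ->|]; [exact: hc|exact: h2].
right; exists x; split => //; first exact: ltnW.
move=> z /andP[hz1]; rewrite ltnS leq_eqVlt => /orP[/eqP ->|hz2] //.
apply: h4; by rewrite hz1.
Qed.

Lemma pos_cp d (A : VASS_MDP d) (t0 : Tr A) ts i :
  t0 \in trans A -> all (mem (trans A)) ts -> chainT (@srcT d A) (@tgtT d A) t0 ts ->
  i < size ts -> pos t0 ts (cp t0 ts i) i = srcT (nth t0 ts i).
Proof.
move=> h0 hts hch hi.
case: (pos_spec t0 ts (cp t0 ts i) i) => [[-> h]|[x [hx hcx -> hz]]].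
  rewrite /psA /cp enum_rankK /=; apply: start_first => x hx.
  apply/negP => /eqP heq; have := h x hx; by rewrite (ty_cp (ltnW hx) heq) eqxx.
have hty := cp_ty h0 hts hcx.
apply: (chain_class hch hx hi hty) => j /andP[hj1 hj2]; apply/negP => /eqP heq.
have := hz j; rewrite hj1 hj2 => /(_ isT).
by rewrite (ty_cp (ltnW hj2) (etrans heq hty)) eqxx.
Qed.

Lemma mem_rsA d (A : VASS_MDP d) (p : st A) : (p \in rsA A) = ~~ isprob p.
Proof. by rewrite mem_filter mem_enum andbT. Qed.

Lemma strat_MD d (A : VASS_MDP d) (t0 : Tr A) sg :
  t0 \in trans A -> is_MD (strat t0 sg).
Proof.
move=> h0 p hp; rewrite /strat.
set t := nth t0 (trans A) _.
case: ifP => [/eqP <-|_] /=.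
  have -> : (t.1.1, t.1.2, t.2) = t by case: t => [[]].
  exact: nth_in_trans h0 (introT allP (fun x (hx : x \in trans A) => hx)).
case: (dfl_trans t0 p) => h1 h2.
move: h1 h2; rewrite /stpT /srcT; case: (dfl t0 p) => [[x v] y] /= h1 h2; by rewrite -h2.
Qed.

Lemma strat_cp d (A : VASS_MDP d) (t0 : Tr A) ts i :
  t0 \in trans A -> all (mem (trans A)) ts ->
  ~~ isprob (srcT (nth t0 ts i)) ->
  pisA t0 (cp t0 ts i) (srcT (nth t0 ts i)) = stpT (nth t0 ts i).
Proof.
move=> h0 hts hp; rewrite /pisA /cp enum_rankK /= /strat ffunE.
rewrite !inordK ?ltnS ?index_size // /tyA ty_label ?mem_rsA //.
have hin : nth t0 ts i \in trans A by exact: nth_in_trans.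
by rewrite nth_index // eqxx.
Qed.

Lemma find_lt d (A : VASS_MDP d) (t0 : Tr A) ts i :
  find (fun j => tyA t0 ts j == tyA t0 ts i) (iota 0 i.+1) < i.+1.
Proof.
rewrite -{2}(size_iota 0 i.+1) -has_find; apply/hasP; exists i => //.
by rewrite mem_iota add0n ltnSn.
Qed.

Lemma cp_gen d (A : VASS_MDP d) (t0 : Tr A) ts ts' i :
  (forall j, j <= i -> tyA t0 ts j = tyA t0 ts' j) ->
  (forall j, j <= i ->
     j = find (fun j => tyA t0 ts j == tyA t0 ts i) (iota 0 i.+1) ->
     srcT (nth t0 ts j) = srcT (nth t0 ts' j)) ->
  cp t0 ts i = cp t0 ts' i.
Proof.
move=> hty hs; rewrite /cp /cpK (hty i) //; congr (enum_rank (_, _)).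
rewrite /startA.
have -> : find (fun j => tyA t0 ts' j == tyA t0 ts' i) (iota 0 i.+1) =
          find (fun j => tyA t0 ts j == tyA t0 ts i) (iota 0 i.+1).
  apply: eq_in_find => x; rewrite mem_iota add0n ltnS => /andP[_ hx] /=.
  by rewrite !hty.
apply: hs => //; by have := find_lt t0 ts i; rewrite ltnS.
Qed.

Lemma cp_prefix d (A : VASS_MDP d) (t0 : Tr A) ts ts' i :
  (forall j, j <= i -> nth t0 ts j = nth t0 ts' j) -> cp t0 ts i = cp t0 ts' i.
Proof.
move=> h; apply: cp_gen => [j hj|j hj _]; last by rewrite h.
apply: ty_prefix => x hx; apply: h; exact: leq_trans hx hj.
Qed.

Lemma cp_prob d (A : VASS_MDP d) (t0 : Tr A) ts ts' i :
  (forall j, j < i -> nth t0 ts j = nth t0 ts' j) ->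
  srcT (nth t0 ts i) = srcT (nth t0 ts' i) -> isprob (srcT (nth t0 ts i)) ->
  cp t0 ts i = cp t0 ts' i.
Proof.
move=> h hs hp; apply: cp_gen => [j|j]; rewrite leq_eqVlt => /orP[/eqP ->|hj] //.
- by apply: ty_prob; rewrite // mem_rsA hp.
- apply: ty_prefix => x hx; apply: h; exact: leq_ltn_trans hx hj.
- by rewrite h.
Qed.

Lemma pos_prefix d (A : VASS_MDP d) (t0 : Tr A) ts ts' c i :
  (forall j, j < i -> nth t0 ts j = nth t0 ts' j) -> pos t0 ts c i = pos t0 ts' c i.
Proof.
elim: i => [|i IH] h //=.
rewrite (@cp_prefix _ _ t0 ts ts' i); last by move=> j hj; apply: h; rewrite ltnS.
by rewrite h // IH // => j hj; apply: h; exact: ltnW.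
Qed.

Lemma piece_prefix d (A : VASS_MDP d) (t0 : Tr A) ts ts' i c :
  (forall j, j <= i -> nth t0 ts j = nth t0 ts' j) -> piece t0 ts i c = piece t0 ts' i c.
Proof.
move=> h; rewrite /piece (cp_prefix h) (h i) ?(@pos_prefix _ _ t0 ts ts') // => j hj.
apply: h; exact: ltnW.
Qed.

Lemma flatten_sel (I : eqType) (U : Type) (l : seq I) (c : I) (f : I -> seq U) :
  uniq l -> c \in l -> (forall j, j != c -> f j = [::]) -> flatten (map f l) = f c.
Proof.
move=> hu hc hf; elim: l hu hc => //= j l IH /andP[hj hu]; rewrite inE.
case: (eqVneq j c) => [hjc _|hne] /=.
  subst c; have -> : flatten (map f l) = [::].
    elim: l hj {IH hu} => //= x l IHl; rewrite inE negb_or => /andP[hx hl].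
    by rewrite (IHl hl) cats0; apply: hf; rewrite eq_sym.
  by rewrite cats0.
by rewrite hf // => /IH ->.
Qed.

Lemma chain_skip d (A : VASS_MDP d) (cur : st A) (l rest : seq (vpath A)) :
  all (fun g : vpath A => nilp (psteps g)) l -> chain_ok cur (l ++ rest) = chain_ok cur rest.
Proof.
elim: l => //= g l IH /andP[h1 h2]; rewrite IH //; by case: (psteps g) h1.
Qed.

Lemma chain_sel d (A : VASS_MDP d) (I : eqType) (l : seq I) (c : I) (f : I -> vpath A)
    (rest : seq (vpath A)) (cur : st A) :
  uniq l -> c \in l -> (forall j, j != c -> psteps (f j) = [::]) -> psteps (f c) != [::] ->
  chain_ok cur (map f l ++ rest) = (pstart (f c) == cur) && chain_ok (plast (f c)) rest.
Proof.
move=> hu hc hf hfc; elim: l hu hc cur => //= j l IH /andP[hj hu]; rewrite inE => hc cur.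
case: (eqVneq j c) => [hjc|hne] /=.
  subst j; move: hfc; case E: (psteps (f c)) => [//|x s] _.
  rewrite chain_skip // all_map; apply/allP => y hy /=; rewrite /nilp hf //.
  by apply: contraNneq hj => <-.
rewrite hf //; by apply: IH; move: hc; rewrite eq_sym (negbTE hne).
Qed.

Lemma len_piece d (A : VASS_MDP d) (t0 : Tr A) ts i c :
  len (piece t0 ts i c) = (cp t0 ts i == c).
Proof. by rewrite /piece; case: ifP. Qed.

Lemma steps_piece d (A : VASS_MDP d) (t0 : Tr A) ts i c :
  psteps (piece t0 ts i c) = if cp t0 ts i == c then [:: stpT (nth t0 ts i)] else [::].
Proof. by rewrite /piece; case: ifP. Qed.

Lemma plast_piece d (A : VASS_MDP d) (t0 : Tr A) ts i c :
  plast (piece t0 ts i c) = pos t0 ts c i.+1.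
Proof. by rewrite /piece /plast /=; case: ifP. Qed.

Lemma pstart_piece d (A : VASS_MDP d) (t0 : Tr A) ts i c :
  t0 \in trans A -> all (mem (trans A)) ts -> chainT (@srcT d A) (@tgtT d A) t0 ts ->
  i < size ts -> pstart (piece t0 ts i c) = pos t0 ts c i.
Proof.
move=> h0 hts hch hi; rewrite /piece; case: ifP => //= /eqP <-.
by rewrite pos_cp.
Qed.

Lemma path_piece d (A : VASS_MDP d) (t0 : Tr A) ts i c :
  t0 \in trans A -> all (mem (trans A)) ts -> is_path (piece t0 ts i c).
Proof.
move=> h0 hts; rewrite /piece; case: ifP => _ //=.
rewrite /is_path /= andbT /srcT /stpT.
have := nth_in_trans i h0 hts; by case: (nth t0 ts i) => [[]].
Qed.

Lemma valid_cat d (A : VASS_MDP d) (p : st A) s1 s2 :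
  valid_from p (s1 ++ s2) = valid_from p s1 && valid_from (last p (map snd s1)) s2.
Proof. by elim: s1 p => [|[v q] s IH] p //=; rewrite IH andbA. Qed.

Lemma compat_cat d (A : VASS_MDP d) sg (p : st A) s1 s2 :
  compat_from sg p (s1 ++ s2) = compat_from sg p s1 && compat_from sg (last p (map snd s1)) s2.
Proof. by elim: s1 p => [|[v q] s IH] p //=; rewrite IH andbA. Qed.

Lemma flat_map_piece d (A : VASS_MDP d) (t0 : Tr A) ts s :
  flat_decomp (map (piece t0 ts) s) =
  flatten [seq [seq piece t0 ts i j | j <- enum 'I_#|KA A|] | i <- s].
Proof. by rewrite /flat_decomp; elim: s => //= i s ->. Qed.

Lemma round_steps d (A : VASS_MDP d) (t0 : Tr A) ts i :
  flatten [seq psteps (piece t0 ts i j) | j <- enum 'I_#|KA A|] = [:: stpT (nth t0 ts i)].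
Proof.
rewrite (@flatten_sel _ _ _ (cp t0 ts i)) ?enum_uniq ?mem_enum //.
  by rewrite steps_piece eqxx.
by move=> j hj; rewrite steps_piece eq_sym (negbTE hj).
Qed.

Lemma steps_flat d (A : VASS_MDP d) (t0 : Tr A) ts s :
  flatten (map (@psteps d A) (flatten [seq [seq piece t0 ts i j | j <- enum 'I_#|KA A|] | i <- s]))
  = [seq stpT (nth t0 ts i) | i <- s].
Proof.
elim: s => //= i s IH; rewrite map_cat flatten_cat IH -map_comp.
by rewrite (round_steps t0 ts i).
Qed.

Lemma nth_Decomp d (A : VASS_MDP d) (t0 : Tr A) (a : vpath A) r0 i :
  i < len a -> nth r0 (DecompA t0 a) i = piece t0 (trs a) i.
Proof. by move=> hi; rewrite /DecompA (nth_map 0) ?size_iota // nth_iota. Qed.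

Lemma decomp_ok d (A : VASS_MDP d) (t0 : Tr A) (a : vpath A) :
  t0 \in trans A -> is_path a -> 0 < len a ->
  is_MD_decomposition (@pisA d A t0) (@psA d A) (DecompA t0 a) a.
Proof.
move=> h0 hp hn.
set ts := trs a.
have hsz : size ts = len a by rewrite /ts /trs size_trs.
have hts : all (mem (trans A)) ts by rewrite /ts /trs -valid_trs.
have hch : chainT (@srcT d A) (@tgtT d A) t0 ts by exact: chain_trs.
have hsteps : psteps a = map (@stpT d A) ts by rewrite /ts /trs stp_trs.
have hstart : pstart a = srcT (nth t0 ts 0).
  by rewrite /ts /trs src_trs ?take0 //; exact: hn.
split.
- by rewrite size_map size_iota.
- by move=> i j hi r0; rewrite size_map size_iota in hi; rewrite nth_Decomp //; exact: path_piece.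
- split.
  + rewrite /DecompA flat_map_piece hstart.
    have : forall m i, i + m = len a ->
      chain_ok (srcT (nth t0 ts i))
        (flatten [seq [seq piece t0 ts i' j | j <- enum 'I_#|KA A|] | i' <- iota i m]).
      elim=> [|m IH] i him //=.
      rewrite (@chain_sel _ _ _ _ (cp t0 ts i)) ?enum_uniq ?mem_enum //; first last.
      * by rewrite steps_piece eqxx.
      * by move=> j hj; rewrite steps_piece eq_sym (negbTE hj).
      have hi : i < size ts by rewrite hsz -him addnS ltnS leq_addr.
      rewrite pstart_piece // pos_cp // eqxx /= plast_piece /=.
      case: m IH him => [|m] IH him /=; first by [].
      rewrite eqxx.
      have -> : tgtT (nth t0 ts i) = srcT (nth t0 ts i.+1).
        by apply: hch; rewrite hsz -him !addnS !ltnS leq_addr.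
      by apply: IH; rewrite addSnnS.
    by apply.
  + by rewrite /DecompA flat_map_piece steps_flat hsteps -hsz -[in LHS](mkseq_nth t0 ts) /mkseq -map_comp.
- move=> i j hi r0; rewrite size_map size_iota in hi.
  rewrite !nth_Decomp // ?(ltnW hi) // plast_piece pstart_piece //; by rewrite hsz.
- move=> j; split.
    by move=> r0; rewrite -nth0 nth_Decomp // pstart_piece ?hsz.
  rewrite /is_path /compatible /=.
  have : forall m i, i + m = len a ->
      valid_from (pos t0 ts j i) (flatten [seq psteps (piece t0 ts i' j) | i' <- iota i m]) &&
      compat_from (pisA t0 j) (pos t0 ts j i) (flatten [seq psteps (piece t0 ts i' j) | i' <- iota i m]).
    elim=> [|m IH] i him //=.
    have hi : i < size ts by rewrite hsz -him addnS ltnS leq_addr.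
    rewrite valid_cat compat_cat.
    have -> : last (pos t0 ts j i) (map snd (psteps (piece t0 ts i j))) = pos t0 ts j i.+1.
      by rewrite -plast_piece /plast pstart_piece.
    have /andP[iv ic] := IH i.+1 (etrans (addSnnS _ _) him).
    rewrite iv ic !andbT steps_piece.
    case: (eqVneq (cp t0 ts i) j) => [<-|] //=.
    rewrite pos_cp // !andbT; apply/andP; split.
      rewrite /srcT /stpT; have := nth_in_trans i h0 hts; by case: (nth t0 ts i) => [[]].
    case: (boolP (isprob (srcT (nth t0 ts i)))) => //= hnp.
    by rewrite strat_cp.
  have -> : [seq psteps (r j) | r <- DecompA t0 a] =
            [seq psteps (piece t0 ts i' j) | i' <- iota 0 (len a)] by rewrite /DecompA -map_comp.
  by move=> /(_ (len a) 0 (add0n _)) /andP[-> ->].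
Qed.

Theorem lemma5p3 (d : nat) (A : VASS_MDP d) :
  exists (k : nat) (pis : 'I_k -> strategy A) (ps : 'I_k -> st A)
         (Decomp : vpath A -> decomp A k) (mode : vpath A -> 'I_k),
    (forall j, is_MD (pis j)) /\
    (forall a : vpath A, is_path a -> 0 < len a ->
       is_MD_decomposition pis ps (Decomp a) a /\
       (exists gam : 'I_k -> vpath A,
          Decomp a = rcons (Decomp (pprefix a (len a).-1)) gam /\
          (forall j, 0 < len (gam j) <-> j = mode a))) /\
    (forall a b : vpath A, is_path a -> 0 < len a -> is_path b -> 0 < len b ->
       pprefix a (len a).-1 = pprefix b (len b).-1 ->
       isprob (plast (pprefix a (len a).-1)) ->
       mode a = mode b).
Proof.
have [s0 _] : exists s0 : st A, s0 \in st A by apply/card_gt0P; exact: st_nonempty.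
have : trans A != [::].
  by have := out_nonempty s0; apply: contraNneq => ->.
case E: (trans A) => [//|t0 trs'] _.
have h0 : t0 \in trans A by rewrite E mem_head.
exists #|KA A|, (pisA t0), (@psA d A), (DecompA t0), (modeA t0).
split; first by move=> j; exact: strat_MD.
split.
  move=> a hp hn; split; first exact: decomp_ok.
  exists (piece t0 (trs a) (len a).-1); split; last first.
    by move=> j; rewrite len_piece /modeA lt0b eq_sym; split => /eqP.
  have hlen : len (pprefix a (len a).-1) = (len a).-1.
    by rewrite /len /pprefix /= size_take ltn_predL hn.
  rewrite /DecompA hlen.
  have -> : iota 0 (len a) = rcons (iota 0 (len a).-1) (len a).-1.
    by rewrite -{1}(prednK hn) -addn1 iotaD cats1.
  rewrite map_rcons; congr rcons; apply/eq_in_map => i; rewrite mem_iota add0n => /andP[_ hi].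
  apply: functional_extensionality => c /=.
  apply: piece_prefix => j hj; rewrite /trs /pprefix /= take_trs nth_take //.
  exact: leq_ltn_trans hj hi.
move=> a b hpa hna hpb hnb hpre hprob.
rewrite /modeA.
have hlen : forall x : vpath A, 0 < len x -> len (pprefix x (len x).-1) = (len x).-1.
  by move=> x hx; rewrite /len /pprefix /= size_take -/(len x) ltn_predL hx.
have hnm : (len a).-1 = (len b).-1 by rewrite -hlen // -(hlen b) // hpre.
rewrite -hnm.
have hsrc : forall x : vpath A, 0 < len x ->
    srcT (nth t0 (trs x) (len x).-1) = plast (pprefix x (len x).-1).
  by move=> x hx; rewrite /trs src_trs // ltn_predL.
have htake : forall x : vpath A, forall j, j < (len x).-1 ->
    nth t0 (trs x) j = nth t0 (trs (pprefix x (len x).-1)) j.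
  by move=> x j hj; rewrite /trs /pprefix /= take_trs nth_take.
apply: cp_prob.
- move=> j hj; rewrite (htake a j hj) hpre -(htake b) // -hnm //.
- by rewrite hsrc // hpre hnm hsrc.
- by rewrite hsrc.
Qed.
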